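(* Consider the setting and framework described in the context, with arbitrary learning rates $\alpha_k\in(0,1]$, $\alpha_1=1$, and arbitrary policy sequences. Then for all $k\ge 1$ and $h\in[H]$, $$\delta_h^k\le \sum_{t=1}^k\alpha_k^t\,\delta_{h+1}^t+\mathrm{reg}_{h+1}^k .$$ Suppose moreover that $\alpha_k=\frac{H+1}{H+k}$ for all $k\ge1$, and that $(\mathrm{reg}^k)_{k\ge1}$ is a sequence of nonnegative reals, non-increasing in $k$, with $\mathrm{reg}^k\ge \mathrm{reg}_h^k$ for all $h\in[H+1]$ and $k\ge 1$. Then for all $k\ge1$ and $h\in[H+1]$, $$\delta_h^k\le \frac{2H}{k}\sum_{t=1}^k \mathrm{reg}^t .$$
   Context: Setting. A finite-horizon two-player zero-sum Markov game with finite state set $\mathcal S$, finite action sets $\mathcal A$ (max-player, $A=|\mathcal A|$) and $\mathcal B$ (min-player, $B=|\mathcal B|$), horizon $H\ge 1$, reward functions $r_h:\mathcal S\times\mathcal A\times\mathcal B\to[0,1]$ and transition kernels $\mathbb P_h(\cdot\mid s,a,b)$ on $\mathcal S$, $h\in[H]$. For $f:\mathcal S\to\mathbb R$, $[\mathbb P_h f](s,a,b)=\sum_{s'}\mathbb P_h(s'\mid s,a,b)f(s')$. For $Q:\mathcal A\times\mathcal B\to\mathbb R$, $x\in\Delta_{\mathcal A}$, $y\in\Delta_{\mathcal B}$, write $\langle Q,x\times y\rangle=\sum_{a,b}x(a)y(b)Q(a,b)$. Optimal values: $Q^\star_{H+1}\equiv 0$, and for $h=H,\dots,1$, $V^\star_{h+1}(s)=\max_{x\in\Delta_{\mathcal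 A}}\min_{y\in\Delta_{\mathcal B}}\langle Q^\star_{h+1}(s,\cdot,\cdot),x\times y\rangle$ (with $V^\star_{H+1}\equiv0$) and $Q^\star_h=r_h+\mathbb P_hV^\star_{h+1}$. Framework. Given learning rates $\alpha_k\in(0,1]$ ($k\ge1$) with $\alpha_1=1$ and arbitrary Markov policies $\mu_h^k(\cdot\mid s)\in\Delta_{\mathcal A}$, $\nu_h^k(\cdot\mid s)\in\Delta_{\mathcal B}$ ($k\ge1$, $h\in[H]$, $s\in\mathcal S$), define $Q_{H+1}^k\equiv 0$ for all $k$, $Q_h^0\equiv H-h+1$, and for $k\ge1$, $h=H,\dots,1$: $$Q_h^k(s,a,b)=(1-\alpha_k)Q_h^{k-1}(s,a,b)+\alpha_k\Big(r_h(s,a,b)+\sum_{s'}\mathbb P_h(s'\mid s,a,b)\langle Q_{h+1}^k(s',\cdot,\cdot),\mu_{h+1}^k(\cdot\mid s')\times\nu_{h+1}^k(\cdot\mid s')\rangle\Big)$$ (for $h=H$ the inner product term is $0$). Let $\alpha_k^t=\alpha_t\prod_{j=t+1}^k(1-\alpha_j)$ for $1\le t\le k$. Weighted regrets: for $h\in[H]$, $\mathrm{reg}_{h,\mu}^k(s)=\max_{z\in\Delta_{\mathcal A}}\sum_{t=1}^k\alpha_k^t\langle Q_h^t(s,\cdot,\cdot),z\times\nu_h^t(\cdot|s)\rangle-\sum_{t=1}^k\alpha_k^t\langle Q_h^t(s,\cdot,\cdot),\mu_h^t(\cdot|s)\times\nu_h^t(\cdot|s)\rangle$, $\mathrm{reg}_{h,\nu}^k(s)=\sum_{t=1}^k\alpha_k^t\langle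 Q_h^t(s,\cdot,\cdot),\mu_h^t(\cdot|s)\times\nu_h^t(\cdot|s)\rangle-\min_{z\in\Delta_{\mathcal B}}\sum_{t=1}^k\alpha_k^t\langle Q_h^t(s,\cdot,\cdot),\mu_h^t(\cdot|s)\times z\rangle$, $\mathrm{reg}_h^k=\max_{s}\max\{\mathrm{reg}_{h,\mu}^k(s),\mathrm{reg}_{h,\nu}^k(s)\}$, and $\mathrm{reg}_{H+1}^k:=0$. Value estimation error: $\delta_h^k=\max_{s,a,b}|Q_h^k(s,a,b)-Q_h^\star(s,a,b)|$ (so $\delta_{H+1}^k=0$). *)

(* Defs.v *)
From mathcomp Require Import all_boot all_order all_algebra.
From mathcomp Require Import boolp classical_sets reals.
Set Implicit Arguments. Unset Strict Implicit. Unset Printing Implicit Defensive.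
Import Order.TTheory GRing.Theory Num.Theory.
Local Open Scope ring_scope.
Local Open Scope classical_set_scope.

Section MG.
Variables (R : realType) (S A B : finType) (H : nat).

Definition simplex (T : finType) : set (T -> R) :=
  [set x | (forall a, 0 <= x a) /\ \sum_a x a = 1].
Arguments simplex T : clear implicits.

Definition ip (Q : A -> B -> R) (x : A -> R) (y : B -> R) : R :=
  \sum_a \sum_b x a * y b * Q a b.

Definition Pf (P : nat -> S -> A -> B -> S -> R) (h : nat) (f : S -> R)
  (s : S) (a : A) (b : B) : R := \sum_s' P h s a b s' * f s'.

(* Optimal Q-functions, by backward recursion on d = H+1-h. *)
Fixpoint Qstar_aux (r : nat -> S -> A -> B -> R) (P : nat -> S -> A -> B -> S -> R)
  (d : nat) : S -> A -> B -> R :=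
  match d with
  | 0 => fun _ _ _ => 0
  | d'.+1 =>
      let h := (H - d')%N in
      let Qn := Qstar_aux r P d' in
      let Vn := fun s' : S =>
        sup [set (inf [set ip (Qn s') x y | y in simplex B]) | x in simplex A] in
      fun s a b => r h s a b + Pf P h Vn s a b
  end.

Definition Qstar r P (h : nat) : S -> A -> B -> R := Qstar_aux r P (H.+1 - h).

Fixpoint Qk_aux (r : nat -> S -> A -> B -> R) (P : nat -> S -> A -> B -> S -> R)
  (alpha : nat -> R) (mu : nat -> nat -> S -> A -> R) (nu : nat -> nat -> S -> B -> R)
  (k : nat) (prev : nat -> S -> A -> B -> R) (d : nat) : S -> A -> B -> R :=
  match d with
  | 0 => fun _ _ _ => 0
  | d'.+1 =>
      let h := (H - d')%N in
      let Qn := Qk_aux r P alpha mu nu k prev d' in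
      fun s a b =>
        (1 - alpha k) * prev h s a b
        + alpha k * (r h s a b
             + Pf P h (fun s' => ip (Qn s') (mu k h.+1 s') (nu k h.+1 s')) s a b)
  end.

Fixpoint Qk r P alpha mu nu (k : nat) : nat -> S -> A -> B -> R :=
  match k with
  | 0 => fun h _ _ _ => (H.+1 - h)%:R
  | k'.+1 => fun h => Qk_aux r P alpha mu nu k'.+1 (Qk r P alpha mu nu k') (H.+1 - h)
  end.

Definition alphakt (alpha : nat -> R) (k t : nat) : R :=
  alpha t * \prod_(t.+1 <= j < k.+1) (1 - alpha j).

Definition reg_mu r P alpha mu nu (h k : nat) (s : S) : R :=
  sup [set \sum_(1 <= t < k.+1) alphakt alpha k t
             * ip (Qk r P alpha mu nu t h s) z (nu t h s) | z in simplex A]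
  - \sum_(1 <= t < k.+1) alphakt alpha k t
             * ip (Qk r P alpha mu nu t h s) (mu t h s) (nu t h s).

Definition reg_nu r P alpha mu nu (h k : nat) (s : S) : R :=
  \sum_(1 <= t < k.+1) alphakt alpha k t
             * ip (Qk r P alpha mu nu t h s) (mu t h s) (nu t h s)
  - inf [set \sum_(1 <= t < k.+1) alphakt alpha k t
             * ip (Qk r P alpha mu nu t h s) (mu t h s) z | z in simplex B].

Definition reg r P alpha mu nu (h k : nat) : R :=
  if h == H.+1 then 0 else
  sup [set Num.max (reg_mu r P alpha mu nu h k s) (reg_nu r P alpha mu nu h k s)
      | s in [set: S]].

Definition delta r P alpha mu nu (h k : nat) : R :=
  \big[Num.max/0]_(s : S) \big[Num.max/0]_(a : A) \big[Num.max/0]_(b : B)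
    `|Qk r P alpha mu nu k h s a b - Qstar r P h s a b|.

End MG.
Arguments simplex {R} T.

(* Main.v *)
Require Import Defs.
From mathcomp Require Import all_boot all_order all_algebra.
From mathcomp Require Import boolp classical_sets reals.
From mathcomp Require Import ring lra.
Import Order.TTheory GRing.Theory Num.Theory.
Local Open Scope ring_scope.

Module Helpers.
Set Implicit Arguments. Unset Strict Implicit.
Local Open Scope ring_scope.
Local Open Scope classical_set_scope.

Section SupInf.
Variables (R : realType) (T : Type) (D : set T) (f : T -> R).

Lemma sup_img_ge x M : D x -> (forall y, D y -> f y <= M) -> f x <= sup (f @` D).
Proof.
move=> Dx HM; apply: ub_le_sup; last by exists x.
by exists M => _ [y Dy <-]; exact: HM.
Qed.

Lemma sup_img_le c : (exists x, D x) -> (forall x, D x -> f x <= c) -> sup (f @` D) <= c.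
Proof.
move=> [x Dx] Hc; apply: ge_sup; first by exists (f x), x.
by move=> _ [y Dy <-]; exact: Hc.
Qed.

Lemma inf_img_le x M : D x -> (forall y, D y -> M <= f y) -> inf (f @` D) <= f x.
Proof.
move=> Dx HM; apply: ge_inf; last by exists x.
by exists M => _ [y Dy <-]; exact: HM.
Qed.

Lemma inf_img_ge c : (exists x, D x) -> (forall x, D x -> c <= f x) -> c <= inf (f @` D).
Proof.
move=> [x Dx] Hc; apply: lb_le_inf; first by exists (f x), x.
by move=> _ [y Dy <-]; exact: Hc.
Qed.
End SupInf.

Section IP.
Variables (R : realType) (A B : finType).

Lemma ip_bound (Q : A -> B -> R) x y c :
  (forall a b, `|Q a b| <= c) -> simplex A x -> simplex B y -> `|ip Q x y| <= c.
Proof.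
move=> HQ [x0 x1] [y0 y1]; rewrite /ip.
apply: le_trans (ler_norm_sum _ _ _) _.
have -> : c = \sum_a x a * c.
  by rewrite -mulr_suml x1 mul1r.
apply: ler_sum => a _.
apply: le_trans (ler_norm_sum _ _ _) _.
have -> : x a * c = \sum_b x a * y b * c.
  by rewrite -mulr_suml -mulr_sumr y1 mulr1.
apply: ler_sum => b _.
rewrite normrM ger0_norm ?mulr_ge0 //; apply: ler_wpM2l; first exact: mulr_ge0.
exact: HQ.
Qed.

Lemma ipB (Q1 Q2 : A -> B -> R) x y : ip Q1 x y - ip Q2 x y = ip (fun a b => Q1 a b - Q2 a b) x y.
Proof.
rewrite /ip -sumrB; apply: eq_bigr => a _; rewrite -sumrB; apply: eq_bigr => b _.
by rewrite mulrBr.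
Qed.

Lemma ip_suml (I : Type) (s : seq I) (w : I -> R) (Q : A -> B -> R) (x : I -> A -> R) y :
  \sum_(i <- s) w i * ip Q (x i) y = ip Q (fun a => \sum_(i <- s) w i * x i a) y.
Proof.
rewrite /ip.
under eq_bigr => i _ do rewrite mulr_sumr.
rewrite exchange_big; apply: eq_bigr => a _.
under eq_bigr => i _ do rewrite mulr_sumr.
rewrite exchange_big; apply: eq_bigr => b _.
rewrite !mulr_suml; apply: eq_bigr => i _; by rewrite !mulrA.
Qed.

Lemma ip_sumr (I : Type) (s : seq I) (w : I -> R) (Q : A -> B -> R) x (y : I -> B -> R) :
  \sum_(i <- s) w i * ip Q x (y i) = ip Q x (fun b => \sum_(i <- s) w i * y i b).
Proof.
rewrite /ip.
under eq_bigr => i _ do rewrite mulr_sumr.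
rewrite exchange_big; apply: eq_bigr => a _.
under eq_bigr => i _ do rewrite mulr_sumr.
rewrite exchange_big; apply: eq_bigr => b _.
rewrite mulr_sumr mulr_suml; apply: eq_bigr => i _.
by rewrite !mulrA [w i * x a]mulrC.
Qed.

End IP.

Section W.
Variables (R : realType) (alpha : nat -> R).
Hypothesis Ha : forall k, (1 <= k)%N -> 0 < alpha k <= 1.
Hypothesis Ha1 : alpha 1%N = 1.

Lemma alphakt_S k t : (t <= k)%N -> alphakt alpha k.+1 t = alphakt alpha k t * (1 - alpha k.+1).
Proof. by move=> tk; rewrite /alphakt big_nat_recr //= mulrA. Qed.

Lemma alphakt_kk k : alphakt alpha k k = alpha k.
Proof. by rewrite /alphakt big_geq // mulr1. Qed.

Lemma W_S (F : nat -> R) k :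
  \sum_(1 <= t < k.+2) alphakt alpha k.+1 t * F t =
  (1 - alpha k.+1) * \sum_(1 <= t < k.+1) alphakt alpha k t * F t + alpha k.+1 * F k.+1.
Proof.
rewrite big_nat_recr //= alphakt_kk; congr (_ + _).
rewrite mulr_sumr big_nat_cond [RHS]big_nat_cond; apply: eq_bigr => t /andP[/andP[_ tk] _].
rewrite alphakt_S //; ring.
Qed.

Lemma W_1 (F : nat -> R) : \sum_(1 <= t < 2) alphakt alpha 1 t * F t = F 1%N.
Proof. by rewrite big_nat1 alphakt_kk Ha1 mul1r. Qed.

Lemma alphakt_ge0 k t : (1 <= t)%N -> 0 <= alphakt alpha k t.
Proof.
move=> t1; rewrite /alphakt mulr_ge0 //; first by case/andP: (Ha t1) => /ltW.
rewrite big_nat_cond; apply: prodr_ge0 => j /andP[/andP[tj _] _].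
have /andP[_ aj] := Ha (leq_trans t1 (ltnW tj)); by rewrite subr_ge0.
Qed.

Lemma W_one k : (1 <= k)%N -> \sum_(1 <= t < k.+1) alphakt alpha k t = 1.
Proof.
case: k => // k _.
have E : forall k, \sum_(1 <= t < k.+1) alphakt alpha k t = \sum_(1 <= t < k.+1) alphakt alpha k t * (fun _ => 1) t.
  by move=> n; apply: eq_bigr => i _; rewrite mulr1.
elim: k => [|k IH]; first by rewrite E W_1.
by rewrite E W_S -E IH; ring.
Qed.

Lemma W_le (F G : nat -> R) k : (forall t, (1 <= t <= k)%N -> F t <= G t) ->
  \sum_(1 <= t < k.+1) alphakt alpha k t * F t <= \sum_(1 <= t < k.+1) alphakt alpha k t * G t.
Proof.
move=> HF; rewrite big_nat_cond [X in _ <= X]big_nat_cond; apply: ler_sum => t /andP[/andP[t1 tk] _].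
by apply: ler_wpM2l; [exact: alphakt_ge0 | apply: HF; rewrite t1 -ltnS].
Qed.

End W.

Section Arith.
Variable R : realFieldType.

Lemma pow_bound (x : R) (j : nat) : 0 <= x -> j%:R * x <= 1 ->
  (1 + x) ^+ j <= 1 + j%:R * x + j%:R ^+ 2 * x ^+ 2.
Proof.
move=> x0; elim: j => [|j IH] hj; first by rewrite expr0 !mul0r !addr0 expr0n /= mul0r addr0.
have hj' : j%:R * x <= 1.
  apply: le_trans hj; rewrite ler_wpM2r // ler_nat //.
have j0 : 0 <= j%:R :> R by [].
rewrite exprS mulrC; apply: le_trans (ler_wpM2r _ (IH hj')) _; first lra.
rewrite -natr1 in hj *; set y := j%:R in hj hj' j0 *.
rewrite !expr2.
have h1 : y * y * (x * x * x) <= y * (x * x).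
  have : y * x * (y * (x * x)) <= 1 * (y * (x * x)) by apply: ler_wpM2r => //; nra.
  by rewrite mul1r => H; apply: le_trans H; rewrite le_eqVlt; apply/orP; left; apply/eqP; ring.
nra.
Qed.

Lemma pow_le3 (H : nat) : (1 <= H)%N -> (1 + H%:R^-1) ^+ H <= 3 :> R.
Proof.
move=> H1; have hp : 0 < H%:R :> R by rewrite ltr0n.
apply: le_trans (pow_bound _ _) _.
- by rewrite invr_ge0 ltW.
- by rewrite mulfV ?gt_eqF.
rewrite -exprMn !mulfV ?gt_eqF // expr1n; lra.
Qed.

Lemma step_ineq (h kk s1 s2 G : R) : 0 < h -> 0 < kk -> 0 <= s1 -> s1 <= s2 ->
  G <= (1 + h^-1) * s1 / kk ->
  (1 - (h + 1) / (h + (kk + 1))) * G + (h + 1) / (h + (kk + 1)) * (s2 / (kk + 1))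
  <= (1 + h^-1) * s2 / (kk + 1).
Proof.
move=> h0 k0 s10 s12 HG.
have d0 : 0 < h + (kk + 1) by lra.
have E1 : 1 - (h + 1) / (h + (kk + 1)) = kk / (h + (kk + 1)).
  by field; rewrite gt_eqF.
rewrite E1.
have a0 : 0 <= kk / (h + (kk + 1)) by rewrite divr_ge0 // ltW.
apply: le_trans (_ : kk / (h + (kk + 1)) * ((1 + h^-1) * s2 / kk)
   + (h + 1) / (h + (kk + 1)) * (s2 / (kk + 1)) <= _).
  rewrite lerD2r; apply: ler_wpM2l => //; apply: le_trans HG _.
  apply: ler_wpM2r; first by rewrite invr_ge0 ltW.
  by apply: ler_wpM2l => //; rewrite addr_ge0 // invr_ge0 ltW.
rewrite le_eqVlt; apply/orP; left; apply/eqP.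
by field; rewrite !gt_eqF //; lra.
Qed.
End Arith.

Section Main.
Variables (R : realType) (S A B : finType) (H : nat)
  (r : nat -> S -> A -> B -> R) (P : nat -> S -> A -> B -> S -> R)
  (alpha : nat -> R) (mu : nat -> nat -> S -> A -> R) (nu : nat -> nat -> S -> B -> R).

Definition Vs (h : nat) (s' : S) : R :=
  sup [set inf [set ip (Qstar H r P h s') x y | y in simplex B] | x in simplex A].

Lemma Qstar_unfold h s a b : (1 <= h <= H)%N ->
  Qstar H r P h s a b = r h s a b + Pf P h (Vs h.+1) s a b.
Proof.
case/andP=> h1 hH; rewrite /Qstar /Vs (_ : (H.+1 - h = (H - h).+1)%N); last by rewrite subSn.
by rewrite /= subKn // subSS.
Qed.

Lemma Qstar_end s a b : Qstar H r P H.+1 s a b = 0.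
Proof. by rewrite /Qstar subnn. Qed.

Lemma Qk_unfold k h s a b : (1 <= h <= H)%N ->
  Qk H r P alpha mu nu k.+1 h s a b =
  (1 - alpha k.+1) * Qk H r P alpha mu nu k h s a b
  + alpha k.+1 * (r h s a b + Pf P h (fun s' => ip (Qk H r P alpha mu nu k.+1 h.+1 s')
                                           (mu k.+1 h.+1 s') (nu k.+1 h.+1 s')) s a b).
Proof.
case/andP=> h1 hH; rewrite [LHS]/= (_ : (H.+1 - h = (H - h).+1)%N); last by rewrite subSn.
by rewrite /= subKn // subSS.
Qed.

Lemma Qk_end k s a b : (1 <= k)%N -> Qk H r P alpha mu nu k H.+1 s a b = 0.
Proof. by case: k => // k _; rewrite /= subnn. Qed.

Lemma le_sumabs (T : finType) (f : T -> R) y : f y <= \sum_s `|f s|.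
Proof.
rewrite (bigD1 y) //=; apply: le_trans (ler_norm _) _.
by rewrite lerDl sumr_ge0.
Qed.

Notation Q := (Qk H r P alpha mu nu).
Notation Qs := (Qstar H r P).
Notation dl := (delta H r P alpha mu nu).

Lemma delta_ge0 h k : 0 <= dl h k.
Proof.
rewrite /delta; elim: (index_enum S) => [|x l IH]; rewrite ?big_nil ?big_cons //.
by rewrite le_max IH orbT.
Qed.

Lemma delta_ge h k s a b : `|Q k h s a b - Qs h s a b| <= dl h k.
Proof.
rewrite /delta; apply: le_trans (le_bigmax _ _ s); apply: le_trans (le_bigmax _ _ a).
exact: (le_bigmax _ _ b).
Qed.

Lemma delta_le h k c : 0 <= c -> (forall s a b, `|Q k h s a b - Qs h s a b| <= c) -> dl h k <= c.
Proof.
move=> c0 Hc; rewrite /delta; apply: bigmax_le => // s _; apply: bigmax_le => // a _.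
by apply: bigmax_le => // b _.
Qed.

Lemma delta_end k : (1 <= k)%N -> dl H.+1 k = 0.
Proof.
move=> k1; apply/eqP; rewrite eq_le delta_ge0 andbT; apply: delta_le => // s a b.
by rewrite Qk_end // Qstar_end subrr normr0.
Qed.

Lemma ip_diff t h s' x y : simplex A x -> simplex B y ->
  `|ip (Q t h s') x y - ip (Qs h s') x y| <= dl h t.
Proof.
move=> sx sy; rewrite ipB; apply: ip_bound => // a b; exact: delta_ge.
Qed.

Lemma ip_absQ (M : A -> B -> R) x y : simplex A x -> simplex B y ->
  `|ip M x y| <= \sum_a \sum_b `|M a b|.
Proof.
move=> sx sy; apply: ip_bound => // a b.
apply: le_trans (_ : `|M a b| <= \sum_b `|M a b|) _.
  by rewrite (bigD1 b) //= lerDl sumr_ge0.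
by rewrite (bigD1 a) //= lerDl sumr_ge0 // => i _; rewrite sumr_ge0.
Qed.

Lemma reg_ge h k s : (1 <= h <= H)%N ->
  reg_mu H r P alpha mu nu h k s <= reg H r P alpha mu nu h k /\
  reg_nu H r P alpha mu nu h k s <= reg H r P alpha mu nu h k.
Proof.
case/andP=> _ hH; have hn : h != H.+1 by rewrite neq_ltn ltnS hH.
rewrite /reg (negbTE hn).
set f := fun s => Num.max (reg_mu H r P alpha mu nu h k s) (reg_nu H r P alpha mu nu h k s).
have : f s <= sup [set f s | s in [set: S]].
  by apply: (@sup_img_ge _ _ _ _ _ (\sum_s `|f s|)) => // y _; exact: le_sumabs.
by rewrite /f ge_max => /andP[].
Qed.

Hypothesis Ha : forall k, (1 <= k)%N -> 0 < alpha k <= 1.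
Hypothesis Ha1 : alpha 1%N = 1.
Hypothesis Hmn : forall k h s, (1 <= k)%N -> (1 <= h <= H)%N ->
     simplex A (mu k h s) /\ simplex B (nu k h s).

Definition gt t h s' := ip (Q t h.+1 s') (mu t h.+1 s') (nu t h.+1 s').

Lemma Qk_W k h s a b : (1 <= k)%N -> (1 <= h <= H)%N ->
  Q k h s a b = \sum_(1 <= t < k.+1) alphakt alpha k t * (r h s a b + Pf P h (gt t h) s a b).
Proof.
case: k => // k _ hh; elim: k => [|k IH].
  by rewrite W_1 // Qk_unfold // Ha1 subrr mul0r add0r mul1r.
by rewrite W_S Qk_unfold // IH.
Qed.


Lemma core h k s' : (1 <= k)%N -> (1 <= h <= H)%N ->
  `|\sum_(1 <= t < k.+1) alphakt alpha k t * ip (Q t h s') (mu t h s') (nu t h s') - Vs h s'|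
   <= \sum_(1 <= t < k.+1) alphakt alpha k t * dl h t + reg H r P alpha mu nu h k.
Proof.
move=> k1 hh.
set Wv := \sum_(1 <= t < k.+1) _.
set D := \sum_(1 <= t < k.+1) _.
set rg := reg _ _ _ _ _ _ _ _.
set Qh := Qs h s'.
set Mq := \sum_a \sum_b `|Qh a b|.
have sm t : (1 <= t)%N -> simplex A (mu t h s') /\ simplex B (nu t h s').
  by move=> t1; exact: Hmn.
have ag t : (1 <= t)%N -> 0 <= alphakt alpha k t by move=> t1; exact: (alphakt_ge0 Ha k t1).
set xb := fun a => \sum_(1 <= t < k.+1) alphakt alpha k t * mu t h s' a.
set yb := fun b => \sum_(1 <= t < k.+1) alphakt alpha k t * nu t h s' b.
have sxb : simplex A xb.
  split.
    move=> a; rewrite /xb big_nat_cond; apply: sumr_ge0 => t /andP[/andP[t1 _] _].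
    by rewrite mulr_ge0 //; [exact: ag | case: (sm t t1) => [[+ _] _]].
  rewrite /xb exchange_big /= -(W_one Ha1 k1) big_nat_cond [RHS]big_nat_cond.
  apply: eq_bigr => t /andP[/andP[t1 _] _]; rewrite -mulr_sumr.
  by case: (sm t t1) => [[_ ->] _]; rewrite mulr1.
have syb : simplex B yb.
  split.
    move=> b; rewrite /yb big_nat_cond; apply: sumr_ge0 => t /andP[/andP[t1 _] _].
    by rewrite mulr_ge0 //; [exact: ag | case: (sm t t1) => [_ [+ _]]].
  rewrite /yb exchange_big /= -(W_one Ha1 k1) big_nat_cond [RHS]big_nat_cond.
  apply: eq_bigr => t /andP[/andP[t1 _] _]; rewrite -mulr_sumr.
  by case: (sm t t1) => [_ [_ ->]]; rewrite mulr1.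
have ipQ x y : simplex A x -> simplex B y -> -Mq <= ip Qh x y <= Mq.
  by move=> sx sy; rewrite -ler_norml; exact: ip_absQ.
have dlt t x y : simplex A x -> simplex B y ->
    ip Qh x y - dl h t <= ip (Q t h s') x y <= ip Qh x y + dl h t.
  move=> sx sy; have := ip_diff t h s' sx sy; rewrite ler_norml => /andP[u v].
  by apply/andP; split; lra.
have [Rmu Rnu] := reg_ge k s' hh.
rewrite /reg_mu /reg_nu -/Wv -/rg in Rmu Rnu.
set F := fun z => \sum_(1 <= t < k.+1) alphakt alpha k t * ip (Q t h s') (mu t h s') z.
have Fle z : simplex B z -> F z <= ip Qh xb z + D.
  move=> sz; rewrite /xb -ip_suml /D -big_split /=.
  rewrite /F; under [X in _ <= X]eq_bigr do rewrite -mulrDr.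
  apply: (W_le Ha) => // t /andP[t1 _]; case: (sm t t1) => sx _.
  by case/andP: (dlt t _ _ sx sz).
have Fge z : simplex B z ->
    \sum_(1 <= t < k.+1) alphakt alpha k t * (- Mq - dl h t) <= F z.
  move=> sz; apply: (W_le Ha) => // t /andP[t1 _]; case: (sm t t1) => sx _.
  case/andP: (dlt t _ _ sx sz) => u _; case/andP: (ipQ _ _ sx sz) => v _; lra.
have U1 : inf [set F z | z in simplex B] <=
          inf [set ip Qh xb z | z in simplex B] + D.
  rewrite -lerBlDr; apply: inf_img_ge; first by exists yb.
  move=> z sz; rewrite lerBlDr; apply: le_trans (Fle z sz).
  by apply: inf_img_le sz (Fge).
have U2 : inf [set ip Qh xb z | z in simplex B] <= Vs h s'.
  apply: (@sup_img_ge _ _ _ (fun x => inf [set ip Qh x y | y in simplex B]) _ Mq) => // x sx.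
  apply: le_trans (_ : ip Qh x yb <= Mq); last by case/andP: (ipQ _ _ sx syb).
  apply: (@inf_img_le _ _ _ _ _ (- Mq)) => // y sy.
  by case/andP: (ipQ _ _ sx sy).
set F' := fun z => \sum_(1 <= t < k.+1) alphakt alpha k t * ip (Q t h s') z (nu t h s').
have F'ge z : simplex A z -> ip Qh z yb - D <= F' z.
  move=> sz; rewrite /yb -ip_sumr /D lerBlDr /F' -big_split /=.
  under [X in _ <= X]eq_bigr do rewrite -mulrDr.
  apply: (W_le Ha) => // t /andP[t1 _]; case: (sm t t1) => _ sy.
  case/andP: (dlt t _ _ sz sy) => u _; lra.
have F'le z : simplex A z ->
    F' z <= \sum_(1 <= t < k.+1) alphakt alpha k t * (Mq + dl h t).
  move=> sz; apply: (W_le Ha) => // t /andP[t1 _]; case: (sm t t1) => _ sy.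
  case/andP: (dlt t _ _ sz sy) => _ u; case/andP: (ipQ _ _ sz sy) => _ v; lra.
have L1 : sup [set ip Qh z yb | z in simplex A] <= sup [set F' z | z in simplex A] + D.
  apply: sup_img_le; first by exists xb.
  move=> z sz; rewrite -lerBlDr; apply: le_trans (F'ge z sz) _.
  by apply: sup_img_ge sz F'le.
have L2 : Vs h s' <= sup [set ip Qh z yb | z in simplex A].
  apply: sup_img_le; first by exists xb.
  move=> x sx; apply: le_trans (_ : ip Qh x yb <= _).
    apply: (@inf_img_le _ _ _ _ _ (- Mq)) => // y sy.
    by case/andP: (ipQ _ _ sx sy).
  apply: (@sup_img_ge _ _ _ (fun z => ip Qh z yb) _ Mq) => // z sz.
  by case/andP: (ipQ _ _ sz syb).
rewrite ler_norml; apply/andP; split; lra.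
Qed.

Hypothesis HP : forall h s a b, (1 <= h <= H)%N ->
     (forall s', 0 <= P h s a b s') /\ \sum_s' P h s a b s' = 1.

Lemma Pf_bound h s a b f c : (1 <= h <= H)%N -> (forall s', `|f s'| <= c) ->
  `|Pf P h f s a b| <= c.
Proof.
move=> hh Hf; case: (HP s a b hh) => P0 P1; rewrite /Pf.
apply: le_trans (ler_norm_sum _ _ _) _.
rewrite -[c]mul1r -P1 mulr_suml; apply: ler_sum => s' _.
by rewrite normrM ger0_norm // ler_wpM2l.
Qed.

Lemma diff_formula k h s a b : (1 <= k)%N -> (1 <= h <= H)%N ->
  Q k h s a b - Qs h s a b =
  Pf P h (fun s' => \sum_(1 <= t < k.+1) alphakt alpha k t * gt t h s' - Vs h.+1 s') s a b.
Proof.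
move=> k1 hh; rewrite Qk_W // Qstar_unfold //.
under eq_bigr do rewrite mulrDr.
rewrite big_split /= -mulr_suml (W_one Ha1 k1) mul1r.
rewrite /Pf; under [X in _ = X]eq_bigr do rewrite mulrBr.
rewrite sumrB opprD addrACA subrr add0r; congr (_ - _).
rewrite (eq_bigr (fun t => \sum_s' alphakt alpha k t * (P h s a b s' * gt t h s'))); last first.
  by move=> t _; rewrite mulr_sumr.
rewrite exchange_big /=; apply: eq_bigr => s' _; rewrite mulr_sumr; apply: eq_bigr => t _.
by rewrite mulrCA.
Qed.

Lemma Vs_end s' : Vs H.+1 s' = 0.
Proof.
rewrite /Vs.
have E : forall x : A -> R, [set ip (Qs H.+1 s') x y | y in simplex B] = [set (0:R) | _ in @simplex R B].
  move=> x; have ip0 y : ip (Qs H.+1 s') x y = 0.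
    by rewrite /ip big1 // => a _; rewrite big1 // => b _; rewrite Qstar_end mulr0.
  by apply/seteqP; split => _ [y Dy <-]; exists y; rewrite ?ip0.
have I0 : inf [set (0:R) | _ in @simplex R B] = 0.
  case: (pselect (exists y : B -> R, simplex B y)) => [[y0 Dy0]|nD].
    have -> : [set (0:R) | _ in @simplex R B] = [set 0].
      by apply/seteqP; split => [_ [y _ <-] // | _ ->]; exists y0.
    exact: inf1.
  have -> : [set (0:R) | _ in @simplex R B] = set0.
    by apply/seteqP; split => [z [y Dy _] | //]; elim: nD; exists y.
  exact: inf0.
under eq_fun do rewrite E I0.
case: (pselect (exists x : A -> R, simplex A x)) => [[x0 Dx0]|nD].
  have -> : [set (0:R) | _ in @simplex R A] = [set 0].
    by apply/seteqP; split => [_ [y _ <-] // | _ ->]; exists x0.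
  exact: sup1.
have -> : [set (0:R) | _ in @simplex R A] = set0.
  by apply/seteqP; split => [z [y Dy _] | //]; elim: nD; exists y.
exact: sup0.
Qed.

Lemma gt_end t s' : (1 <= t)%N -> gt t H s' = 0.
Proof.
move=> t1; rewrite /gt /ip big1 // => a _; rewrite big1 // => b _.
by rewrite Qk_end // mulr0.
Qed.

Lemma reg_end k : reg H r P alpha mu nu H.+1 k = 0.
Proof. by rewrite /reg eqxx. Qed.

Lemma part1 k h : (1 <= k)%N -> (1 <= h <= H)%N ->
  dl h k <= \sum_(1 <= t < k.+1) alphakt alpha k t * dl h.+1 t + reg H r P alpha mu nu h.+1 k.
Proof.
move=> k1 hh; set c := (X in _ <= X).
have per s' : `|\sum_(1 <= t < k.+1) alphakt alpha k t * gt t h s' - Vs h.+1 s'| <= c.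
  case/andP: (hh) => h1 hH0; case: (ltnP h H) => hH.
    by apply: core => //; rewrite ltnS h1.
  have eh : h = H by apply/eqP; rewrite eqn_leq hH0.
  rewrite /c eh Vs_end reg_end subr0 addr0 big_nat_cond [X in _ <= X]big_nat_cond.
  rewrite big1; last by move=> t /andP[/andP[t1 _] _]; rewrite gt_end // mulr0.
  rewrite big1; last by move=> t /andP[/andP[t1 _] _]; rewrite delta_end // mulr0.
  by rewrite normr0.
case: (pselect (exists s : S, True)) => [[s0 _]|nS].
  apply: delta_le; first exact: le_trans (normr_ge0 _) (per s0).
  move=> s a b; rewrite diff_formula //; exact: Pf_bound.
have -> : dl h k = 0.
  by rewrite /delta big_pred0 // => s; apply/negP => _; apply: nS; exists s.
rewrite /c; apply: addr_ge0.
  rewrite big_nat_cond; apply: sumr_ge0 => t /andP[/andP[t1 _] _].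
  by rewrite mulr_ge0 ?delta_ge0 // (alphakt_ge0 Ha k t1).
rewrite /reg; case: ifP => // _.
have -> : [set Num.max (reg_mu H r P alpha mu nu h.+1 k s) (reg_nu H r P alpha mu nu h.+1 k s)
          | s in [set: S]] = set0.
  by apply/seteqP; split => [z [y _ _] | //]; elim: nS; exists y.
by rewrite sup0.
Qed.

Variable regb : nat -> R.
Hypothesis H1 : (1 <= H)%N.
Hypothesis Halpha : forall k, (1 <= k)%N -> alpha k = (H.+1)%:R / (H + k)%:R.
Hypothesis Hr0 : forall k, (1 <= k)%N -> 0 <= regb k.
Hypothesis Hrd : forall k, (1 <= k)%N -> regb k.+1 <= regb k.
Hypothesis Hreg : forall h k, (1 <= h <= H.+1)%N -> (1 <= k)%N ->
  reg H r P alpha mu nu h k <= regb k.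

Definition Sb k := \sum_(1 <= t < k.+1) regb t.

Lemma Sb_ge0 k : 0 <= Sb k.
Proof. by rewrite /Sb big_nat_cond; apply: sumr_ge0 => t /andP[/andP[t1 _] _]; exact: Hr0. Qed.

Lemma Sb_S k : Sb k.+1 = Sb k + regb k.+1.
Proof. by rewrite /Sb big_nat_recr. Qed.

Lemma regb_mono t k : (1 <= t)%N -> (t <= k)%N -> regb k <= regb t.
Proof.
move=> t1; elim: k => [|k IH]; first by rewrite leqn0 => /eqP ht; rewrite ht in t1.
rewrite leq_eqVlt => /orP[/eqP-> //|]; rewrite ltnS => tk.
by apply: le_trans (IH tk); apply: Hrd; exact: leq_trans tk.
Qed.

Lemma regb_le_avg k : (1 <= k)%N -> regb k <= Sb k / k%:R.
Proof.
move=> k1; have k0 : 0 < k%:R :> R by rewrite ltr0n.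
rewrite ler_pdivlMr //.
have : \sum_(1 <= t < k.+1) regb k <= Sb k.
  rewrite /Sb big_nat_cond [X in _ <= X]big_nat_cond; apply: ler_sum => t /andP[/andP[t1 tk] _].
  exact: regb_mono.
by rewrite sumr_const_nat subn1 /= mulr_natr.
Qed.

Lemma avg k : (1 <= k)%N ->
  \sum_(1 <= t < k.+1) alphakt alpha k t * (Sb t / t%:R) <= (1 + H%:R^-1) * Sb k / k%:R.
Proof.
case: k => // k _; elim: k => [|k IH].
  by rewrite (W_1 Ha1) !divr1 ler_peMl ?Sb_ge0 // lerDl invr_ge0.
rewrite (W_S alpha) Halpha //.
have e1 : (H.+1)%:R = H%:R + 1 :> R by rewrite -addn1 natrD.
have e2 : (H + k.+2)%:R = H%:R + ((k.+1)%:R + 1) :> R by rewrite natrD -[k.+2]addn1 natrD.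
have e3 : (k.+2)%:R = (k.+1)%:R + 1 :> R by rewrite -[k.+2]addn1 natrD.
rewrite e2 e1 e3; apply: (@step_ineq R _ _ (Sb k.+1)) => //.
all: try by rewrite ltr0n.
all: try exact: Sb_ge0.
all: try by rewrite [Sb k.+2]Sb_S lerDl Hr0.
Qed.

Definition cn n : R := H%:R * ((1 + H%:R^-1) ^+ n - 1).

Lemma cn_ge0 n : 0 <= cn n.
Proof.
rewrite /cn mulr_ge0 // subr_ge0 exprn_ege1 // lerDl invr_ge0 //.
Qed.

Lemma cn_S n : cn n.+1 = cn n * (1 + H%:R^-1) + 1.
Proof.
have h0 : H%:R != 0 :> R by rewrite pnatr_eq0 -lt0n.
by rewrite /cn exprS; field.
Qed.

Lemma bound n : (n <= H)%N -> forall k, (1 <= k)%N ->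
  dl (H.+1 - n) k <= cn n * Sb k / k%:R.
Proof.
elim: n => [|n IH] nH k k1.
  rewrite subn0 delta_end // mulr_ge0 ?invr_ge0 // mulr_ge0 ?cn_ge0 ?Sb_ge0 //.
have hh : (1 <= H.+1 - n.+1 <= H)%N.
  by apply/andP; split; rewrite subSS ?subn_gt0 ?leq_subr.
have eh : (H.+1 - n.+1).+1 = (H.+1 - n)%N by rewrite subSS subSn // ltnW.
apply: le_trans (part1 k1 hh) _; rewrite eh.
have IH' := IH (ltnW nH).
apply: le_trans (_ : \sum_(1 <= t < k.+1) alphakt alpha k t * (cn n * (Sb t / t%:R))
   + regb k <= _).
  apply: lerD.
    apply: (W_le Ha) => t /andP[t1 _]; rewrite mulrA; exact: IH'.
  apply: Hreg => //; apply/andP; split; [by rewrite subn_gt0 ltnS; exact: ltnW | exact: leq_subr].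
under eq_bigr do rewrite mulrCA.
rewrite -mulr_sumr.
apply: le_trans (_ : cn n * ((1 + H%:R^-1) * Sb k / k%:R) + Sb k / k%:R <= _).
  apply: lerD; last exact: regb_le_avg.
  by apply: ler_wpM2l; [exact: cn_ge0 | exact: avg].
by rewrite cn_S le_eqVlt; apply/orP; left; apply/eqP; ring.
Qed.

End Main.

End Helpers.
Import Helpers.

Theorem mainTheorem1 (R : realType) (S A B : finType) (H : nat)
  (r : nat -> S -> A -> B -> R) (P : nat -> S -> A -> B -> S -> R)
  (alpha : nat -> R) (mu : nat -> nat -> S -> A -> R) (nu : nat -> nat -> S -> B -> R) :
  (1 <= H)%N ->
  (forall h s a b, (1 <= h <= H)%N -> 0 <= r h s a b <= 1) ->
  (forall h s a b, (1 <= h <= H)%N ->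
     (forall s', 0 <= P h s a b s') /\ \sum_s' P h s a b s' = 1) ->
  (forall k, (1 <= k)%N -> 0 < alpha k <= 1) ->
  alpha 1%N = 1 ->
  (forall k h s, (1 <= k)%N -> (1 <= h <= H)%N ->
     simplex A (mu k h s) /\ simplex B (nu k h s)) ->
  (forall k h, (1 <= k)%N -> (1 <= h <= H)%N ->
     delta H r P alpha mu nu h k
     <= \sum_(1 <= t < k.+1) alphakt alpha k t * delta H r P alpha mu nu h.+1 t
        + reg H r P alpha mu nu h.+1 k)
  /\
  ((forall k, (1 <= k)%N -> alpha k = (H.+1)%:R / (H + k)%:R) ->
   forall regb : nat -> R,
     (forall k, (1 <= k)%N -> 0 <= regb k) ->
     (forall k, (1 <= k)%N -> regb k.+1 <= regb k) ->
     (forall h k, (1 <= h <= H.+1)%N -> (1 <= k)%N -> reg H r P alpha mu nu h k <= regb k) ->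
     forall k h, (1 <= k)%N -> (1 <= h <= H.+1)%N ->
       delta H r P alpha mu nu h k
       <= (2 * H%:R) / k%:R * \sum_(1 <= t < k.+1) regb t).
Proof.
move=> H1 Hr HP Ha Ha1 Hmn; split.
  by move=> k h k1 hh; exact: (part1 r Ha Ha1 Hmn HP k1 hh).
move=> Halpha regb Hr0 Hrd Hreg k h k1 /andP[h1 hH].
have nH : (H.+1 - h <= H)%N by rewrite leq_subLR -addn1 addnC leq_add2r.
have eh : h = (H.+1 - (H.+1 - h))%N by rewrite subKn.
rewrite eh; apply: le_trans (bound Ha Ha1 Hmn HP H1 Halpha Hr0 Hrd Hreg nH k1) _.
have k0 : 0 < k%:R :> R by rewrite ltr0n.
have Hp : 0 < H%:R :> R by rewrite ltr0n.
have -> : \sum_(1 <= t < k.+1) regb t = Sb regb k by [].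
have s0 : 0 <= Sb regb k by exact: (Sb_ge0 Hr0).
set s := Sb regb k.
have -> : 2 * H%:R / k%:R * s = (2 * H%:R) * (s / k%:R) by ring.
rewrite -mulrA; apply: ler_wpM2r; first by rewrite divr_ge0 // ltW.
rewrite /cn.
have e : (1 + H%:R^-1) ^+ (H.+1 - h) <= 3 :> R.
  apply: le_trans (pow_le3 R H1).
  apply: ler_weXn2l => //; rewrite lerDl invr_ge0 ltW //.
have h2 : H%:R * ((1 + H%:R^-1) ^+ (H.+1 - h) - 1) <= H%:R * 2 :> R.
  by apply: ler_wpM2l; [exact: ltW | lra].
by rewrite [X in _ <= X]mulrC.
Qed.
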